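(* Let $n,m\in\mathbb N$, $d:=\min\{n,m\}$, fix $\alpha\in[1,d]$ and let $\Phi:\mathbb M_n\to\mathbb M_m$ be Hermitian-preserving. (a) For all unitaries $U\in\mathbb M_m$, $V\in\mathbb M_n$: $\Phi\in\mathsf P_\alpha\iff\mathrm{Ad}_U\circ\Phi\circ\mathrm{Ad}_V\in\mathsf P_\alpha$, and $\Phi\in\mathsf{SP}_\alpha\iff\mathrm{Ad}_U\circ\Phi\circ\mathrm{Ad}_V\in\mathsf{SP}_\alpha$, where $\mathrm{Ad}_U(Y)=UYU^\ast$. (b) Membership of $\Phi$ in $\mathsf P_\alpha$ (and in $\mathsf{SP}_\alpha$) does not depend on the choice of matrix units used to define the Choi matrix: for any orthonormal basis $\{v_i\}$ of $\mathbb C^n$, with $E'_{ij}:=v_iv_j^\ast$ and $C'_\Phi:=\sum_{i,j}E'_{ij}\otimes\Phi(E'_{ij})$, one has $C'_\Phi\in\mathsf{BP}_\alpha\iff C_\Phi\in\mathsf{BP}_\alpha$ and $C'_\Phi\in\mathsf K_\alpha\iff C_\Phi\in\mathsf K_\alpha$.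
   Context: $C_\Phi:=\sum_{i,j=1}^nE_{ij}\otimes\Phi(E_{ij})$ with $E_{ij}$ the standard matrix units of $\mathbb M_n$. For $\psi=\sum_{i,j}a_{ij}e_i\otimes f_j\in\mathbb C^n\otimes\mathbb C^m$, its Schmidt coefficients $s_1(\psi)\ge\dots\ge s_d(\psi)\ge0$ are the singular values of $[a_{ij}]$. For $\alpha\in[1,d]$ with $k=\lfloor\alpha\rfloor$, $\theta=\alpha-k$, $r=\lceil\alpha\rceil$, a unit vector $\psi$ is $\alpha$-admissible if $s_j(\psi)=0$ for $j\ge r+1$ and, when $\theta>0$, $s_{k+1}(\psi)\le\frac\theta k\sum_{j=1}^ks_j(\psi)$; $\mathcal V_\alpha$ is the set of these. $\mathsf K_\alpha$ is the closure of the convex cone generated by $\{\psi\psi^\ast:\psi\in\mathcal V_\alpha\}$; $\mathsf{BP}_\alpha:=\{W \text{ Hermitian}:\langle\psi,W\psi\rangle\ge0\ \forall\psi\in\mathcal V_\alpha\}$. A Hermitian-preserving $\Phi$ is in $\mathsf P_\alpha$ if $C_\Phi\in\mathsf{BP}_\alpha$ and in $\mathsf{SP}_\alpha$ if $C_\Phi\in\mathsf K_\alpha$. *)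

(* Defs.v *)
From HB Require Import structures.
From mathcomp Require Import all_boot all_order all_algebra.
From mathcomp Require Import complex.
From mathcomp Require Import reals.
Set Implicit Arguments. Unset Strict Implicit. Unset Printing Implicit Defensive.
Import Order.TTheory GRing.Theory Num.Theory.
Local Open Scope ring_scope.
Local Open Scope complex_scope.

Section QDefs.
Variable R : realType.
Local Notation C := R[i].

Definition adjmx (p q : nat) (A : 'M[C]_(p, q)) : 'M[C]_(q, p) :=
  (map_mx Num.conj A)^T.

Definition isUnitaryMx (p : nat) (U : 'M[C]_p) : Prop :=
  U *m adjmx U = 1%:M.

Definition isHermitianMx (p : nat) (W : 'M[C]_p) : Prop := adjmx W = W.

Definition Ad_map (p : nat) (U : 'M[C]_p) (Y : 'M[C]_p) : 'M[C]_p :=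
  U *m Y *m adjmx U.

Definition hermitian_preserving (n m : nat) (Phi : 'M[C]_n -> 'M[C]_m) : Prop :=
  forall X : 'M[C]_n, isHermitianMx X -> isHermitianMx (Phi X).

(* index (i,j) of 'I_(p*q), the inverse of mxvec_index *)
Definition pair_of_index (p q : nat) (k : 'I_(p * q)) : 'I_p * 'I_q :=
  enum_val (cast_ord (esym (mxvec_cast p q)) k).

(* Kronecker product A (x) B : basis vector e_i (x) f_j has index mxvec_index i j *)
Definition kron (p1 q1 p2 q2 : nat) (A : 'M[C]_(p1, q1)) (B : 'M[C]_(p2, q2))
  : 'M[C]_(p1 * p2, q1 * q2) :=
  \matrix_(k, l) (A (pair_of_index k).1 (pair_of_index l).1 *
                  B (pair_of_index k).2 (pair_of_index l).2).

Definition choi (n m : nat) (Phi : 'M[C]_n -> 'M[C]_m) : 'M[C]_(n * m) :=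
  \sum_(i < n) \sum_(j < n) kron (delta_mx i j) (Phi (delta_mx i j)).

Definition choi_basis (n m : nat) (v : 'I_n -> 'cV[C]_n)
  (Phi : 'M[C]_n -> 'M[C]_m) : 'M[C]_(n * m) :=
  \sum_(i < n) \sum_(j < n)
     kron (v i *m adjmx (v j)) (Phi (v i *m adjmx (v j))).

Definition orthonormal_basis (n : nat) (v : 'I_n -> 'cV[C]_n) : Prop :=
  forall i j : 'I_n, adjmx (v i) *m v j = (i == j)%:R%:M.

(* The coefficient matrix [a_ij] of psi = sum a_ij e_i (x) f_j *)
Definition coefmx (n m : nat) (psi : 'cV[C]_(n * m)) : 'M[C]_(n, m) :=
  vec_mx psi^T.

(* s (1-based: s 1 >= ... >= s (min p q) >= 0) are the singular values of A,
   i.e. A = U * Sigma * V^* with U, V unitary, Sigma rectangular diagonal. *)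
Definition singular_values (p q : nat) (A : 'M[C]_(p, q)) (s : nat -> R) : Prop :=
  [/\ (forall j : nat, (1 <= j)%N -> (j < minn p q)%N -> s j.+1 <= s j),
      (forall j : nat, (1 <= j)%N -> (j <= minn p q)%N -> 0 <= s j) &
      exists (U : 'M[C]_p) (V : 'M[C]_q),
        [/\ isUnitaryMx U, isUnitaryMx V &
            A = U *m (\matrix_(i, j) ((i == j :> nat)%:R * (s i.+1)%:C))
                  *m adjmx V]].

Definition admissible (n m : nat) (alpha : R) (psi : 'cV[C]_(n * m)) : Prop :=
  let d := minn n m in
  let k := Num.floor alpha in
  let theta := alpha - k%:~R in
  let r := Num.ceil alpha in
  (adjmx psi *m psi = 1%:M) /\
  exists s : nat -> R,
    [/\ singular_values (coefmx psi) s,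
        (forall j : nat, (r + 1 <= j%:Z)%R -> (j <= d)%N -> s j = 0) &
        (0 < theta ->
           s (`|k|%N.+1) <= theta / k%:~R * \sum_(1 <= j < `|k|%N.+1) s j)].

Definition cone_gen (n m : nat) (alpha : R) (X : 'M[C]_(n * m)) : Prop :=
  exists (N : nat) (c : 'I_N -> R) (psi : 'I_N -> 'cV[C]_(n * m)),
    [/\ forall l, 0 <= c l, forall l, @admissible n m alpha (psi l) &
        X = \sum_(l < N) (c l)%:C *: (psi l *m adjmx (psi l))].

Definition Kcone (n m : nat) (alpha : R) (W : 'M[C]_(n * m)) : Prop :=
  forall eps : R, 0 < eps ->
    exists X, @cone_gen n m alpha X /\
      forall k l, `|W k l - X k l| < eps%:C.

Definition BP (n m : nat) (alpha : R) (W : 'M[C]_(n * m)) : Prop :=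
  isHermitianMx W /\
  forall psi, @admissible n m alpha psi -> 0 <= (adjmx psi *m W *m psi) 0 0.

Definition P_alpha (n m : nat) (alpha : R) (Phi : 'M[C]_n -> 'M[C]_m) : Prop :=
  @BP n m alpha (choi Phi).

Definition SP_alpha (n m : nat) (alpha : R) (Phi : 'M[C]_n -> 'M[C]_m) : Prop :=
  @Kcone n m alpha (choi Phi).

End QDefs.
Arguments cone_gen {R} n m alpha X.
Arguments Kcone {R} n m alpha W.
Arguments BP {R} n m alpha W.

(* Main.v *)
Require Import Defs.
From HB Require Import structures.
From mathcomp Require Import all_boot all_order all_algebra.
From mathcomp Require Import complex.
From mathcomp Require Import reals.
From mathcomp Require Import ring lra.
Import Order.TTheory GRing.Theory Num.Theory.
Local Open Scope ring_scope.
Set Implicit Arguments. Unset Strict Implicit. Unset Printing Implicit Defensive.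
Local Open Scope complex_scope.
Section S.
Variable R : realType.
Local Notation C := R[i].

Lemma pair_mxvec p q (i : 'I_p) (j : 'I_q) : pair_of_index (mxvec_index i j) = (i, j).
Proof. by rewrite /pair_of_index /mxvec_index cast_ordK enum_rankK. Qed.

Lemma mxvec_pair p q (k : 'I_(p * q)) :
  mxvec_index (pair_of_index k).1 (pair_of_index k).2 = k.
Proof. by case: (mxvec_indexP k) => i j; rewrite pair_mxvec. Qed.

Lemma sum_pair p q (F : 'I_(p * q) -> C) :
  \sum_(k < p * q) F k = \sum_(i < p) \sum_(j < q) F (mxvec_index i j).
Proof.
rewrite pair_big /=.
rewrite (reindex (fun x : 'I_p * 'I_q => mxvec_index x.1 x.2)) //=.
exists (@pair_of_index p q) => x _; first by rewrite pair_mxvec; case: x.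
by rewrite mxvec_pair.
Qed.

Lemma mxvec_index_eq p q (i k : 'I_p) (j l : 'I_q) :
  (mxvec_index i j == mxvec_index k l) = (i == k) && (j == l).
Proof.
apply/eqP/andP => [/(congr1 (@pair_of_index p q))|[/eqP-> /eqP->]] //.
by rewrite !pair_mxvec => -[-> ->].
Qed.

Lemma kronE p1 q1 p2 q2 (A : 'M[C]_(p1, q1)) (B : 'M[C]_(p2, q2)) i j k l :
  kron A B (mxvec_index i j) (mxvec_index k l) = A i k * B j l.
Proof. by rewrite /kron mxE !pair_mxvec. Qed.

Lemma kron_mul p1 q1 r1 p2 q2 r2 (A1 : 'M[C]_(p1, q1)) (A2 : 'M[C]_(q1, r1))
  (B1 : 'M[C]_(p2, q2)) (B2 : 'M[C]_(q2, r2)) :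
  kron A1 B1 *m kron A2 B2 = kron (A1 *m A2) (B1 *m B2).
Proof.
apply/matrixP => x y; case: (mxvec_indexP x) => i j; case: (mxvec_indexP y) => k l.
rewrite mxE sum_pair kronE !mxE mulr_suml; apply: eq_bigr => a _.
rewrite mulr_sumr; apply: eq_bigr => b _; rewrite !kronE; ring.
Qed.

Lemma kron1 p q : kron (1%:M : 'M[C]_p) (1%:M : 'M[C]_q) = 1%:M.
Proof.
apply/matrixP => x y; case: (mxvec_indexP x) => i j; case: (mxvec_indexP y) => k l.
rewrite kronE [1%:M i k]mxE [1%:M j l]mxE [1%:M (mxvec_index _ _) _]mxE mxvec_index_eq.
by case: (i == k); case: (j == l); rewrite ?mulr1 ?mulr0 ?mul0r.
Qed.

Lemma kron_sumr p1 q1 p2 q2 I (r : seq I) (P : pred I) (A : 'M[C]_(p1, q1))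
   (F : I -> 'M[C]_(p2, q2)) :
  kron A (\sum_(x <- r | P x) F x) = \sum_(x <- r | P x) kron A (F x).
Proof.
apply/matrixP => x y; rewrite mxE !summxE mulr_sumr.
by apply: eq_bigr => z _; rewrite mxE.
Qed.

Lemma kron_suml p1 q1 p2 q2 I (r : seq I) (P : pred I) (B : 'M[C]_(p2, q2))
   (F : I -> 'M[C]_(p1, q1)) :
  kron (\sum_(x <- r | P x) F x) B = \sum_(x <- r | P x) kron (F x) B.
Proof.
apply/matrixP => x y; rewrite mxE !summxE mulr_suml.
by apply: eq_bigr => z _; rewrite mxE.
Qed.

Lemma kron_scaler p1 q1 p2 q2 (c : C) (A : 'M[C]_(p1, q1)) (B : 'M[C]_(p2, q2)) :
  kron A (c *: B) = c *: kron A B.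
Proof. by apply/matrixP => x y; rewrite !mxE; ring. Qed.

Lemma kron_scalel p1 q1 p2 q2 (c : C) (A : 'M[C]_(p1, q1)) (B : 'M[C]_(p2, q2)) :
  kron (c *: A) B = c *: kron A B.
Proof. by apply/matrixP => x y; rewrite !mxE; ring. Qed.

Lemma adjmxE p q (A : 'M[C]_(p, q)) i j : adjmx A i j = Num.conj (A j i).
Proof. by rewrite /adjmx !mxE. Qed.

Lemma adjmxM p q r (A : 'M[C]_(p, q)) (B : 'M[C]_(q, r)) :
  adjmx (A *m B) = adjmx B *m adjmx A.
Proof. by rewrite /adjmx map_mxM trmx_mul. Qed.

Lemma adjmxK p q (A : 'M[C]_(p, q)) : adjmx (adjmx A) = A.
Proof. by apply/matrixP => i j; rewrite !adjmxE conjCK. Qed.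

Lemma adjmx1 p : adjmx (1%:M : 'M[C]_p) = 1%:M.
Proof. by apply/matrixP => i j; rewrite adjmxE !mxE eq_sym rmorph_nat. Qed.

Lemma adjmxD p q (A B : 'M[C]_(p, q)) : adjmx (A + B) = adjmx A + adjmx B.
Proof. by apply/matrixP => i j; rewrite !mxE rmorphD. Qed.

Lemma adjmxZ p q (c : C) (A : 'M[C]_(p, q)) : adjmx (c *: A) = Num.conj c *: adjmx A.
Proof. by apply/matrixP => i j; rewrite !mxE rmorphM. Qed.

Lemma adjmx_sum p q I (r : seq I) (P : pred I) (F : I -> 'M[C]_(p, q)) :
  adjmx (\sum_(x <- r | P x) F x) = \sum_(x <- r | P x) adjmx (F x).
Proof.
apply/matrixP => i j; rewrite adjmxE !summxE rmorph_sum.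
by apply: eq_bigr => z _; rewrite adjmxE.
Qed.

Lemma adjmx_kron p1 q1 p2 q2 (A : 'M[C]_(p1, q1)) (B : 'M[C]_(p2, q2)) :
  adjmx (kron A B) = kron (adjmx A) (adjmx B).
Proof. by apply/matrixP => x y; rewrite !mxE rmorphM. Qed.

Lemma adjmx_tr p q (A : 'M[C]_(p, q)) : adjmx A^T = map_mx Num.conj A.
Proof. by apply/matrixP => i j; rewrite adjmxE !mxE. Qed.


Lemma unitaryC p (U : 'M[C]_p) : isUnitaryMx U -> adjmx U *m U = 1%:M.
Proof. exact: mulmx1C. Qed.

Lemma unitary_adj p (U : 'M[C]_p) : isUnitaryMx U -> isUnitaryMx (adjmx U).
Proof. by move=> hU; rewrite /isUnitaryMx adjmxK unitaryC. Qed.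

Lemma unitaryM p (U V : 'M[C]_p) : isUnitaryMx U -> isUnitaryMx V -> isUnitaryMx (U *m V).
Proof.
move=> hU hV; rewrite /isUnitaryMx adjmxM mulmxA -(mulmxA U) hV mulmx1 //.
Qed.

Lemma unitary1 p : isUnitaryMx (1%:M : 'M[C]_p).
Proof. by rewrite /isUnitaryMx adjmx1 mulmx1. Qed.

Lemma unitary_kron p q (A : 'M[C]_p) (B : 'M[C]_q) :
  isUnitaryMx A -> isUnitaryMx B -> isUnitaryMx (kron A B).
Proof. by move=> hA hB; rewrite /isUnitaryMx adjmx_kron kron_mul hA hB kron1. Qed.

Lemma unitary_tr p (U : 'M[C]_p) : isUnitaryMx U -> isUnitaryMx U^T.
Proof.
move=> hU; rewrite /isUnitaryMx adjmx_tr.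
have -> : map_mx Num.conj U = (adjmx U)^T by rewrite /adjmx trmxK.
by rewrite -trmx_mul unitaryC // trmx1.
Qed.

Lemma unitary_entry p (U : 'M[C]_p) i j : isUnitaryMx U -> `|U i j| <= 1.
Proof.
move=> hU.
have h : \sum_a `|U i a| ^+ 2 = 1.
  have := congr1 (fun M : 'M[C]_p => M i i) hU; rewrite !mxE eqxx /= => e; apply: etrans e.
  by apply: eq_bigr => a _; rewrite normCK adjmxE.
rewrite -(@expr_le1 _ 2) // -h (bigD1 j) //= lerDl sumr_ge0 // => a _.
exact: exprn_ge0.
Qed.

Lemma coefmx_kron p q (A : 'M[C]_p) (B : 'M[C]_q) (psi : 'cV[C]_(p * q)) :
  coefmx (kron A B *m psi) = A *m coefmx psi *m B^T.
Proof.
apply/matrixP => i j; rewrite /coefmx !mxE sum_pair.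
under [RHS]eq_bigr do rewrite !mxE mulr_suml.
rewrite exchange_big /=; apply: eq_bigr => a _; apply: eq_bigr => b _.
rewrite kronE !mxE; ring.
Qed.

Lemma admissible_kron n m (alpha : R) (A : 'M[C]_n) (B : 'M[C]_m) psi :
  isUnitaryMx A -> isUnitaryMx B ->
  admissible alpha psi -> admissible alpha (kron A B *m psi).
Proof.
move=> hA hB [hn [s [[h1 h2 [U [V [hU hV hE]]]] h3 h4]]].
split.
  have hW := unitary_kron hA hB.
  by rewrite adjmxM -mulmxA (mulmxA (adjmx (kron A B))) (unitaryC hW) mul1mx.
exists s; split => //; split => //.
exists (A *m U), (adjmx (B^T) *m V); split.
- exact: unitaryM.
- by apply: unitaryM => //; apply/unitary_adj/unitary_tr.
rewrite coefmx_kron hE adjmxM adjmxK !mulmxA //.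
Qed.

Lemma BP_conj n m (alpha : R) (A : 'M[C]_n) (B : 'M[C]_m) X :
  isUnitaryMx A -> isUnitaryMx B ->
  BP n m alpha X -> BP n m alpha (kron A B *m X *m adjmx (kron A B)).
Proof.
move=> hA hB [hX hpos]; split.
  by rewrite /isHermitianMx !adjmxM adjmxK hX mulmxA.
move=> psi hpsi.
have := hpos _ (admissible_kron (unitary_adj hA) (unitary_adj hB) hpsi).
by rewrite -adjmx_kron adjmxM adjmxK !mulmxA.
Qed.

Lemma entry_bound N (W D : 'M[C]_N) (e : C) : isUnitaryMx W -> 0 <= e ->
  (forall a b, `|D a b| <= e) ->
  forall k l, `|(W *m D *m adjmx W) k l| <= (N * N)%:R * e.
Proof.
move=> hW he hD k l; rewrite mxE.
apply: le_trans (ler_norm_sum _ _ _) _.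
have h1 b : `|(W *m D) k b * adjmx W b l| <= N%:R * e.
  rewrite normrM -[X in _ <= X]mulr1; apply: ler_pM => //.
  - rewrite mxE; apply: le_trans (ler_norm_sum _ _ _) _.
    have h2 : \sum_a `|W k a * D a b| <= \sum_(a < N) e.
      apply: ler_sum => a _.
      rewrite normrM -[X in _ <= X]mul1r; apply: ler_pM => //.
      exact: unitary_entry.
    by apply: le_trans h2 _; rewrite sumr_const card_ord mulr_natl.
  - exact/unitary_entry/unitary_adj.
apply: le_trans (ler_sum _ (fun b _ => h1 b)) _.
by rewrite sumr_const card_ord -mulrnAl -mulr_natr -natrM.
Qed.

Lemma cone_gen_conj n m (alpha : R) (A : 'M[C]_n) (B : 'M[C]_m) Y :
  isUnitaryMx A -> isUnitaryMx B ->
  cone_gen n m alpha Y -> cone_gen n m alpha (kron A B *m Y *m adjmx (kron A B)).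
Proof.
move=> hA hB [N [c [psi [hc hpsi ->]]]].
exists N, c, (fun l => kron A B *m psi l); split => //.
  by move=> l; apply: admissible_kron.
rewrite mulmx_sumr mulmx_suml; apply: eq_bigr => l _.
by rewrite -scalemxAr -scalemxAl adjmxM !mulmxA.
Qed.

Lemma Kcone_conj n m (alpha : R) (A : 'M[C]_n) (B : 'M[C]_m) X :
  isUnitaryMx A -> isUnitaryMx B ->
  Kcone n m alpha X -> Kcone n m alpha (kron A B *m X *m adjmx (kron A B)).
Proof.
move=> hA hB hK eps he.
pose K : R := ((n * m) * (n * m))%:R.
pose e' := eps / (K + 1).
have hK0 : 0 <= K by rewrite /K ler0n.
have he' : 0 < e' by rewrite /e' divr_gt0 // ltr_wpDl.
have [Y [hY hclose]] := hK e' he'.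
exists (kron A B *m Y *m adjmx (kron A B)); split; first exact: cone_gen_conj.
move=> k l.
have -> : (kron A B *m X *m adjmx (kron A B)) k l - (kron A B *m Y *m adjmx (kron A B)) k l
   = (kron A B *m (X - Y) *m adjmx (kron A B)) k l.
  by rewrite mulmxBr mulmxBl !mxE.
have hb := @entry_bound _ (kron A B) (X - Y) e'%:C (unitary_kron hA hB) _ _ k l.
apply: le_lt_trans (hb _ _) _.
- by rewrite ler0c ltW.
- by move=> a b; rewrite !mxE ltW.
rewrite -(rmorph_nat (real_complex R)) -rmorphM /= ltcR.
rewrite -/K /e' mulrA ltr_pdivrMr; last by rewrite ltr_wpDl.
nra.
Qed.

Lemma delta_conj_entry p q r s (P : 'M[C]_(p, q)) (Q : 'M[C]_(r, s)) a b k l :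
  (P *m delta_mx a b *m Q) k l = P k a * Q b l.
Proof.
rewrite mxE (bigD1 b) //= big1 => [|z hz].
  rewrite mxE (bigD1 a) //= big1 => [|w hw]; last by rewrite mxE (negbTE hw) mulr0.
  by rewrite mxE !eqxx mulr1 addr0 addr0.
rewrite mxE big1 ?mul0r // => w _; rewrite mxE (negbTE hz) andbF mulr0 //.
Qed.

Lemma delta_conj p q r s (P : 'M[C]_(p, q)) (Q : 'M[C]_(r, s)) a b :
  P *m delta_mx a b *m Q = \sum_k \sum_l (P k a * Q b l) *: delta_mx k l.
Proof.
rewrite {1}[LHS]matrix_sum_delta; apply: eq_bigr => k _; apply: eq_bigr => l _.
by rewrite delta_conj_entry.
Qed.

Lemma choi_S n m (Phi : {linear 'M[C]_n -> 'M[C]_m}) (M N : 'M[C]_n) :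
  \sum_(i < n) \sum_(j < n) kron (delta_mx i j) (Phi (M *m delta_mx i j *m N)) =
  \sum_(k < n) \sum_(l < n) kron (M^T *m delta_mx k l *m N^T) (Phi (delta_mx k l)).
Proof.
have L : \sum_(i < n) \sum_(j < n) kron (delta_mx i j) (Phi (M *m delta_mx i j *m N)) =
  \sum_(i < n) \sum_(j < n) \sum_(k < n) \sum_(l < n)
     (M k i * N j l) *: kron (delta_mx i j) (Phi (delta_mx k l)).
  apply: eq_bigr => i _; apply: eq_bigr => j _.
  rewrite delta_conj linear_sum kron_sumr; apply: eq_bigr => k _.
  rewrite linear_sum kron_sumr; apply: eq_bigr => l _.
  by rewrite linearZ kron_scaler.
have Rr : \sum_(k < n) \sum_(l < n) kron (M^T *m delta_mx k l *m N^T) (Phi (delta_mx k l)) =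
  \sum_(k < n) \sum_(l < n) \sum_(i < n) \sum_(j < n)
     (M k i * N j l) *: kron (delta_mx i j) (Phi (delta_mx k l)).
  apply: eq_bigr => k _; apply: eq_bigr => l _.
  rewrite delta_conj kron_suml; apply: eq_bigr => i _.
  rewrite kron_suml; apply: eq_bigr => j _.
  by rewrite kron_scalel !mxE.
rewrite L Rr [LHS]pair_big [RHS]pair_big.
under eq_bigr do rewrite pair_big.
under [RHS]eq_bigr do rewrite pair_big.
by rewrite exchange_big.
Qed.

Lemma choiAd n m (Phi : {linear 'M[C]_n -> 'M[C]_m}) (V : 'M[C]_n) :
  \sum_(i < n) \sum_(j < n) kron (delta_mx i j) (Phi (V *m delta_mx i j *m adjmx V)) =
  kron V^T 1%:M *m choi Phi *m adjmx (kron V^T (1%:M : 'M[C]_m)).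
Proof.
rewrite choi_S /choi mulmx_sumr mulmx_suml; apply: eq_bigr => k _.
rewrite mulmx_sumr mulmx_suml; apply: eq_bigr => l _.
rewrite adjmx_kron adjmx1 adjmx_tr !kron_mul mul1mx mulmx1.
by rewrite /adjmx trmxK.
Qed.

Lemma conj_back n m (A : 'M[C]_n) (B : 'M[C]_m) X :
  isUnitaryMx A -> isUnitaryMx B ->
  kron (adjmx A) (adjmx B) *m (kron A B *m X *m adjmx (kron A B))
     *m adjmx (kron (adjmx A) (adjmx B)) = X.
Proof.
move=> hA hB; have hW := unitary_kron hA hB.
rewrite -adjmx_kron adjmxK !mulmxA (unitaryC hW) mul1mx -mulmxA (unitaryC hW) mulmx1 //.
Qed.

Lemma BP_iff n m (alpha : R) (A : 'M[C]_n) (B : 'M[C]_m) X :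
  isUnitaryMx A -> isUnitaryMx B ->
  BP n m alpha X <-> BP n m alpha (kron A B *m X *m adjmx (kron A B)).
Proof.
move=> hA hB; split; first exact: BP_conj.
move=> h; rewrite -(conj_back X hA hB).
by apply: BP_conj => //; apply: unitary_adj.
Qed.

Lemma Kcone_iff n m (alpha : R) (A : 'M[C]_n) (B : 'M[C]_m) X :
  isUnitaryMx A -> isUnitaryMx B ->
  Kcone n m alpha X <-> Kcone n m alpha (kron A B *m X *m adjmx (kron A B)).
Proof.
move=> hA hB; split; first exact: Kcone_conj.
move=> h; rewrite -(conj_back X hA hB).
by apply: Kcone_conj => //; apply: unitary_adj.
Qed.

Lemma choi_Ad n m (Phi : {linear 'M[C]_n -> 'M[C]_m}) (U : 'M[C]_m) (V : 'M[C]_n) :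
  choi (Ad_map U \o Phi \o Ad_map V) =
  kron 1%:M U *m (kron V^T 1%:M *m choi Phi *m adjmx (kron V^T (1%:M : 'M[C]_m)))
    *m adjmx (kron (1%:M : 'M[C]_n) U).
Proof.
rewrite -choiAd /choi mulmx_sumr mulmx_suml; apply: eq_bigr => i _.
rewrite mulmx_sumr mulmx_suml; apply: eq_bigr => j _.
by rewrite adjmx_kron adjmx1 !kron_mul mul1mx mulmx1.
Qed.

Lemma choi_basis_eq n m (Phi : {linear 'M[C]_n -> 'M[C]_m}) (v : 'I_n -> 'cV[C]_n) :
  let V := \matrix_(k, i) v i k 0 in
  choi_basis v Phi =
  kron V 1%:M *m (kron V^T 1%:M *m choi Phi *m adjmx (kron V^T (1%:M : 'M[C]_m)))
    *m adjmx (kron V (1%:M : 'M[C]_m)).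
Proof.
move=> V; rewrite -choiAd /choi_basis mulmx_sumr mulmx_suml; apply: eq_bigr => i _.
rewrite mulmx_sumr mulmx_suml; apply: eq_bigr => j _.
have -> : v i *m adjmx (v j) = V *m delta_mx i j *m adjmx V.
  apply/matrixP => x y; rewrite delta_conj_entry mxE big_ord1 !adjmxE !mxE.
  by [].
by rewrite adjmx_kron adjmx1 !kron_mul mul1mx mulmx1.
Qed.

Lemma onb_unitary n (v : 'I_n -> 'cV[C]_n) : orthonormal_basis v ->
  isUnitaryMx (\matrix_(k, i) v i k 0).
Proof.
move=> hv; apply: mulmx1C; apply/matrixP => i j.
have := congr1 (fun M : 'M[C]_1 => M 0 0) (hv i j); rewrite !mxE /= => e.
rewrite /= mulr1n in e; apply: (etrans _ e); apply: eq_bigr => x _.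
by rewrite !adjmxE !mxE.
Qed.

End S.

Theorem proposition3p11 (R : realType) (n m : nat) (alpha : R)
    (Phi : {linear 'M[R[i]]_n -> 'M[R[i]]_m}) :
  1 <= alpha <= (minn n m)%:R ->
  hermitian_preserving Phi ->
  (forall (U : 'M[R[i]]_m) (V : 'M[R[i]]_n), isUnitaryMx U -> isUnitaryMx V ->
     (P_alpha alpha Phi <-> P_alpha alpha (Ad_map U \o Phi \o Ad_map V)) /\
     (SP_alpha alpha Phi <-> SP_alpha alpha (Ad_map U \o Phi \o Ad_map V))) /\
  (forall v : 'I_n -> 'cV[R[i]]_n, orthonormal_basis v ->
     (BP n m alpha (choi_basis v Phi) <-> BP n m alpha (choi Phi)) /\
     (Kcone n m alpha (choi_basis v Phi) <-> Kcone n m alpha (choi Phi))).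
Proof.
move=> _ _; split.
  move=> U V hU hV; rewrite /P_alpha /SP_alpha choi_Ad.
  have hVt := unitary_tr hV; have h1n := @unitary1 R n; have h1m := @unitary1 R m.
  split.
    rewrite (BP_iff _ _ hVt h1m); exact: (BP_iff _ _ h1n hU).
  rewrite (Kcone_iff _ _ hVt h1m); exact: (Kcone_iff _ _ h1n hU).
move=> v hv; rewrite choi_basis_eq.
have hV := onb_unitary hv; have hVt := unitary_tr hV; have h1m := @unitary1 R m.
split.
  by rewrite -(BP_iff _ _ hV h1m) -(BP_iff _ _ hVt h1m).
by rewrite -(Kcone_iff _ _ hV h1m) -(Kcone_iff _ _ hVt h1m).
Qed.
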